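(* Let $A=\{0,1,2\}$ and let $T\colon A^4\to A$ be given by $T(1,1,2,2)=T(1,2,1,2)=1$ and $T(\mathbf{x})=0$ for all other $\mathbf{x}\in A^4$. Let $f\colon A^2\to A$ be given by $f(x,y)=1$ if $\{x,y\}=\{1,2\}$ and $f(x,y)=0$ otherwise. Then \[\{T\}^{*(2)*(2)}=\langle\{T\}\rangle^{(2)}\ \dot\cup\ \{f\}.\]
   Context: An $m$-ary $g$ commutes with an $n$-ary $h$ if $g\bigl((h((x_{ij})_{j}))_{i}\bigr)=h\bigl((g((x_{ij})_{i}))_{j}\bigr)$ for all $(x_{ij})\in A^{m\times n}$. For a set $F$ of finitary operations on $A$ (positive arity), $F^*$ is the set of all such operations commuting with every member of $F$, and $F^{(n)}$ is the set of $n$-ary members of $F$; superscripts apply from left to right, so $\{T\}^{*(2)*(2)}=(((\{T\}^* )^{(2)})^* )^{(2)}$. $\langle\{T\}\rangle$ is the clone generated by $T$ (all term operations of positive arity, including projections). *)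

(* Defs.v *)
From mathcomp Require Import all_boot.
Set Implicit Arguments. Unset Strict Implicit. Unset Printing Implicit Defensive.

Definition A := 'I_3.
Definition a0 : A := @Ordinal 3 0 isT.
Definition a1 : A := @Ordinal 3 1 isT.
Definition a2 : A := @Ordinal 3 2 isT.

Definition op (n : nat) := {ffun {ffun 'I_n -> A} -> A}.

Definition commutes (m n : nat) (g : op m) (h : op n) : Prop :=
  forall x : 'I_m -> 'I_n -> A,
    g [ffun i => h [ffun j => x i j]] = h [ffun j => g [ffun i => x i j]].

Definition Tfun (x : {ffun 'I_4 -> A}) : A :=
  let v k := nat_of_ord (x (inord k)) in
  if [&& v 0 == 1, v 1 == 1, v 2 == 2 & v 3 == 2]
     || [&& v 0 == 1, v 1 == 2, v 2 == 1 & v 3 == 2]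
  then a1 else a0.
Definition T : op 4 := [ffun x => Tfun x].

Definition ffun2 (x : {ffun 'I_2 -> A}) : A :=
  let v k := nat_of_ord (x (inord k)) in
  if ((v 0 == 1) && (v 1 == 2)) || ((v 0 == 2) && (v 1 == 1))
  then a1 else a0.
Definition fop : op 2 := [ffun x => ffun2 x].

Definition TstarB (h : op 2) : Prop := commutes h T.

Definition TstarBstarB (g : op 2) : Prop := forall h : op 2, TstarB h -> commutes g h.

Inductive term (n : nat) : Type :=
| Var : 'I_n -> term n
| AppT : ('I_4 -> term n) -> term n.

Fixpoint eval_term (n : nat) (t : term n) (x : {ffun 'I_n -> A}) : A :=
  match t with
  | Var i => x i
  | AppT ts => T [ffun k => eval_term (ts k) x]
  end.

Definition in_clone (n : nat) (g : op n) : Prop :=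
  exists t : term n, g = [ffun x => eval_term t x].

(* Main.v *)
Require Import Defs.
From mathcomp Require Import all_boot.
Set Implicit Arguments. Unset Strict Implicit. Unset Printing Implicit Defensive.

Definition Tn (a b c d : nat) : nat :=
  if [&& a == 1, b == 1, c == 2 & d == 2] || [&& a == 1, b == 2, c == 1 & d == 2]
  then 1 else 0.
Definition fn (a b : nat) : nat :=
  if ((a == 1) && (b == 2)) || ((a == 2) && (b == 1)) then 1 else 0.

Definition tn (t : seq nat) (a b : nat) : nat := nth 0 t (3 * a + b).

Definition tab (g : op 2) (a b : A) : A :=
  g [ffun j : 'I_2 => if val j == 0 then a else b].

Definition tabl (g : op 2) : seq nat :=
  [seq val (tab g (inord (k %/ 3)) (inord (k %% 3))) | k <- iota 0 9].

Lemma hE (g : op 2) u : g u = tab g (u (inord 0)) (u (inord 1)).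
Proof.
rewrite /tab; congr (g _); apply/ffunP => j; rewrite ffunE.
case: j => [[|[|//]]] Hj /=.
  by congr (u _); apply: val_inj; rewrite /= inordK.
by congr (u _); apply: val_inj; rewrite /= inordK.
Qed.

Lemma valtab (g : op 2) (a b : A) : val (tab g a b) = tn (tabl g) (val a) (val b).
Proof.
have Hk : 3 * a + b < 9.
  by case: a => [[|[|[|//]]] ?]; case: b => [[|[|[|//]]] ?].
rewrite /tn /tabl (nth_map 0) ?size_iota // nth_iota // add0n.
have E1 : (3 * a + b) %/ 3 = a.
  by rewrite mulnC divnMDl // (divn_small (ltn_ord b)) addn0.
rewrite E1.
have E2 : (3 * a + b) %% 3 = b.
  by rewrite mulnC modnMDl modn_small.
rewrite E2.
by rewrite !inord_val.
Qed.

Lemma valg (g : op 2) u :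
  val (g u) = tn (tabl g) (val (u (inord 0))) (val (u (inord 1))).
Proof. by rewrite hE valtab. Qed.

Lemma valT u :
  val (T u) = Tn (val (u (inord 0))) (val (u (inord 1)))
                 (val (u (inord 2))) (val (u (inord 3))).
Proof. by rewrite /T ffunE /Tfun /Tn; case: ifP. Qed.

Lemma valTf u :
  val (Tfun u) = Tn (val (u (inord 0))) (val (u (inord 1)))
                 (val (u (inord 2))) (val (u (inord 3))).
Proof. by rewrite /Tfun /Tn; case: ifP. Qed.

Lemma valf u : val (fop u) = fn (val (u (inord 0))) (val (u (inord 1))).
Proof. by rewrite /fop ffunE /ffun2 /fn; case: ifP. Qed.

Lemma tabl_size g : size (tabl g) = 9.
Proof. by rewrite size_map size_iota. Qed.

Lemma tabl_lt g : all (fun v => v < 3) (tabl g).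
Proof. apply/allP => v /mapP [k _ ->]; exact: ltn_ord. Qed.

Lemma tabl_inj (g g' : op 2) : tabl g = tabl g' -> g = g'.
Proof.
move=> E; apply/ffunP => u; rewrite (hE g) (hE g'); apply: val_inj.
by rewrite !valtab E.
Qed.

Lemma v20 : val (inord 0 : 'I_2) = 0. Proof. exact: inordK. Qed.
Lemma v21 : val (inord 1 : 'I_2) = 1. Proof. exact: inordK. Qed.
Lemma v40 : val (inord 0 : 'I_4) = 0. Proof. exact: inordK. Qed.
Lemma v41 : val (inord 1 : 'I_4) = 1. Proof. exact: inordK. Qed.
Lemma v42 : val (inord 2 : 'I_4) = 2. Proof. exact: inordK. Qed.
Lemma v43 : val (inord 3 : 'I_4) = 3. Proof. exact: inordK. Qed.

Definition all3 (P : nat -> bool) := all P (iota 0 3).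

Lemma all3P P : all3 P -> forall a : A, P (val a).
Proof. by move=> /allP H a; apply: H; rewrite mem_iota ltn_ord. Qed.

Definition alltabs (P : seq nat -> bool) :=
  all3 (fun v0 => all3 (fun v1 => all3 (fun v2 => all3 (fun v3 =>
  all3 (fun v4 => all3 (fun v5 => all3 (fun v6 => all3 (fun v7 =>
  all3 (fun v8 => P [:: v0; v1; v2; v3; v4; v5; v6; v7; v8]))))))))).

Lemma alltabsP P : alltabs P -> forall t, size t = 9 -> all (fun v => v < 3) t -> P t.
Proof.
move=> H [|v0 [|v1 [|v2 [|v3 [|v4 [|v5 [|v6 [|v7 [|v8 [|]]]]]]]]]] //= _.
move=> /and5P [h0 h1 h2 h3 /and5P [h4 h5 h6 h7 /andP [h8 _]]].
have M : forall v, v < 3 -> v \in iota 0 3 by move=> v; rewrite mem_iota.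
move: H; rewrite /alltabs /all3.
move=> /allP /(_ _ (M _ h0)) /allP /(_ _ (M _ h1)) /allP /(_ _ (M _ h2)).
move=> /allP /(_ _ (M _ h3)) /allP /(_ _ (M _ h4)) /allP /(_ _ (M _ h5)).
move=> /allP /(_ _ (M _ h6)) /allP /(_ _ (M _ h7)) /allP /(_ _ (M _ h8)).
done.
Qed.

Definition comm2 (tg th : seq nat) :=
  all3 (fun a => all3 (fun b => all3 (fun c => all3 (fun d =>
    tn tg (tn th a b) (tn th c d) == tn th (tn tg a c) (tn tg b d))))).

Lemma comm2P (g h : op 2) : comm2 (tabl g) (tabl h) -> commutes g h.
Proof.
move=> H x; apply: val_inj.
rewrite valg !ffunE !valg !ffunE valg !ffunE !valg !ffunE.
move: H => /all3P /(_ (x (inord 0) (inord 0))) /all3P /(_ (x (inord 0) (inord 1))).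
move=> /all3P /(_ (x (inord 1) (inord 0))) /all3P /(_ (x (inord 1) (inord 1))).
by move/eqP.
Qed.

Lemma commP2 (g h : op 2) : commutes g h -> comm2 (tabl g) (tabl h).
Proof.
move=> H.
apply/allP => a; rewrite mem_iota => /andP [_ Ha].
apply/allP => b; rewrite mem_iota => /andP [_ Hb].
apply/allP => c; rewrite mem_iota => /andP [_ Hc].
apply/allP => d; rewrite mem_iota => /andP [_ Hd].
pose x (i j : 'I_2) : A := inord (if val i == 0 then (if val j == 0 then a else b)
                               else (if val j == 0 then c else d)).
have := congr1 val (H x).
rewrite valg !ffunE !valg !ffunE valg !ffunE !valg !ffunE.
rewrite /x /= ?v20 ?v21 /= !inordK //.
move=> ->. by []. Qed.

Definition Teq (t : seq nat) (m : seq nat) :=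
  let v k := nth 0 m k in
  tn t (Tn (v 0) (v 1) (v 2) (v 3)) (Tn (v 4) (v 5) (v 6) (v 7)) ==
  Tn (tn t (v 0) (v 4)) (tn t (v 1) (v 5)) (tn t (v 2) (v 6)) (tn t (v 3) (v 7)).

Lemma commT_Teq (h : op 2) m : commutes h T -> all (fun v => v < 3) m ->
  Teq (tabl h) m.
Proof.
move=> H /allP Hm.
have Hn : forall k, nth 0 m k < 3.
  move=> k; case: (ltnP k (size m)) => Hk; first by apply: Hm; rewrite mem_nth.
  by rewrite nth_default.
pose x (i : 'I_2) (j : 'I_4) : A := inord (nth 0 m (4 * i + j)).
have := congr1 val (H x).
rewrite valg !ffunE !valTf !ffunE !valg !ffunE.
rewrite /x /= ?v20 ?v21 ?v40 ?v41 ?v42 ?v43 /= !inordK //.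
by move=> E; apply/eqP; exact: E.
Qed.

Definition TeqFull (t : seq nat) :=
  all3 (fun v0 => all3 (fun v1 => all3 (fun v2 => all3 (fun v3 =>
  all3 (fun v4 => all3 (fun v5 => all3 (fun v6 => all3 (fun v7 =>
  Teq t [:: v0; v1; v2; v3; v4; v5; v6; v7])))))))).

Lemma TeqFullP (h : op 2) : TeqFull (tabl h) -> commutes h T.
Proof.
move=> H x; apply: val_inj.
rewrite valg !ffunE !valTf !ffunE !valg !ffunE.
move: H.
move=> /all3P /(_ (x (inord 0) (inord 0))) /all3P /(_ (x (inord 0) (inord 1))).
move=> /all3P /(_ (x (inord 0) (inord 2))) /all3P /(_ (x (inord 0) (inord 3))).
move=> /all3P /(_ (x (inord 1) (inord 0))) /all3P /(_ (x (inord 1) (inord 1))).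
move=> /all3P /(_ (x (inord 1) (inord 2))) /all3P /(_ (x (inord 1) (inord 3))).
by move/eqP.
Qed.

Definition ftab := [:: 0;0;0;0;0;1;0;1;0].
Definition C5 := [:: [::0;0;0;0;0;0;0;0;0]; [::0;0;0;0;0;0;0;1;0];
  [::0;0;0;0;0;1;0;0;0]; [::0;0;0;1;1;1;2;2;2]; [::0;1;2;0;1;2;0;1;2]].
Definition hs := [:: [::0;0;0;0;0;0;1;0;0]; [::0;0;0;0;0;0;0;0;2]].
Definition tests := [:: [:: 2; 1; 1; 0; 2; 2; 2; 1];
  [:: 1; 1; 2; 2; 2; 1; 1; 2];
  [:: 2; 2; 1; 1; 1; 1; 2; 2];
  [:: 0; 2; 0; 2; 2; 1; 2; 1];
  [:: 1; 2; 2; 2; 1; 2; 1; 2];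
  [:: 2; 2; 1; 1; 1; 1; 1; 1];
  [:: 1; 1; 1; 1; 1; 2; 1; 2];
  [:: 2; 2; 2; 2; 0; 0; 2; 2];
  [:: 1; 0; 1; 0; 2; 2; 2; 2];
  [:: 2; 2; 1; 1; 0; 0; 2; 2];
  [:: 1; 1; 1; 1; 2; 2; 1; 1];
  [:: 0; 1; 0; 1; 2; 1; 2; 1];
  [:: 2; 0; 2; 0; 2; 2; 2; 2];
  [:: 2; 2; 1; 2; 2; 0; 1; 0];
  [:: 1; 1; 2; 2; 2; 2; 0; 0];
  [:: 0; 1; 0; 1; 2; 2; 2; 2];
  [:: 1; 2; 1; 2; 1; 2; 1; 2];
  [:: 1; 2; 1; 2; 1; 0; 1; 2];
  [:: 0; 0; 2; 2; 2; 2; 2; 2];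
  [:: 2; 2; 2; 2; 1; 0; 1; 0];
  [:: 2; 2; 2; 2; 2; 1; 2; 1];
  [:: 1; 1; 2; 2; 1; 2; 1; 2];
  [:: 2; 0; 2; 0; 1; 2; 1; 2];
  [:: 1; 1; 2; 2; 2; 2; 1; 1];
  [:: 2; 2; 2; 2; 2; 0; 2; 0];
  [:: 1; 1; 2; 2; 2; 2; 2; 2];
  [:: 2; 0; 2; 0; 0; 2; 0; 2];
  [:: 0; 0; 2; 2; 2; 2; 0; 0];
  [:: 2; 1; 2; 1; 2; 2; 2; 2];
  [:: 2; 2; 2; 2; 0; 0; 1; 1];
  [:: 2; 2; 2; 2; 1; 1; 2; 2]].

Lemma check1 : alltabs (fun t => all (comm2 t) hs ==> (t \in ftab :: C5)).
Proof. by vm_compute. Qed.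
Lemma check2 : alltabs (fun t => all (Teq t) tests ==> comm2 ftab t).
Proof. by vm_compute. Qed.
Lemma check3 : all TeqFull hs.
Proof. by vm_compute. Qed.
Lemma check4 : all (fun c0 => all (fun c1 => all (fun c2 => all (fun c3 =>
  [seq Tn (nth 0 c0 k) (nth 0 c1 k) (nth 0 c2 k) (nth 0 c3 k) | k <- iota 0 9]
   \in C5) C5) C5) C5) C5.
Proof. by vm_compute. Qed.
Lemma check5 : all (all (fun v => v < 3)) tests.
Proof. by vm_compute. Qed.

Definition hop (t : seq nat) : op 2 :=
  [ffun u : {ffun 'I_2 -> A} => (inord (tn t (val (u (inord 0))) (val (u (inord 1)))) : A)].
Lemma tabl_fun (g : op 2) (G : nat -> nat -> nat) :
  (forall u, val (g u) = G (val (u (inord 0))) (val (u (inord 1)))) ->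
  tabl g = [seq G (k %/ 3) (k %% 3) | k <- iota 0 9].
Proof.
move=> H; apply/eq_in_map => k; rewrite mem_iota => /andP [_ Hk].
have H1 : k %/ 3 < 3 by rewrite ltn_divLR.
have H2 : k %% 3 < 3 by rewrite ltn_mod.
by rewrite /tab H !ffunE v20 v21 /= !inordK.
Qed.

Lemma tn_lt t a b : all (fun v => v < 3) t -> tn t a b < 3.
Proof.
move=> /allP Ht; rewrite /tn.
case: (ltnP (3 * a + b) (size t)) => Hk; first by apply: Ht; rewrite mem_nth.
by rewrite nth_default.
Qed.

Lemma tabl_hop t : all (fun v => v < 3) t ->
  tabl (hop t) = [seq tn t (k %/ 3) (k %% 3) | k <- iota 0 9].
Proof. move=> Ht; apply: tabl_fun => u; rewrite ffunE; apply: inordK; exact: tn_lt. Qed.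

Lemma tabl_h1 : tabl (hop [::0;0;0;0;0;0;1;0;0]) = [::0;0;0;0;0;0;1;0;0].
Proof. by rewrite tabl_hop //; vm_compute. Qed.
Lemma tabl_h2 : tabl (hop [::0;0;0;0;0;0;0;0;2]) = [::0;0;0;0;0;0;0;0;2].
Proof. by rewrite tabl_hop //; vm_compute. Qed.
Lemma tabl_f : tabl fop = ftab.
Proof. by rewrite (tabl_fun valf); vm_compute. Qed.

Definition tV0 : term 2 := Var (inord 0).
Definition tV1 : term 2 := Var (inord 1).
Definition tc0 : term 2 := AppT (fun _ => Var (inord 0)).
Definition t7 : term 2 := AppT (fun k : 'I_4 => if val k < 2 then Var (inord 1) else Var (inord 0)).
Definition t5 : term 2 := AppT (fun k : 'I_4 => if val k < 2 then Var (inord 0) else Var (inord 1)).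

Definition top (t : term 2) : op 2 := [ffun x => eval_term t x].

Lemma tabl_V0 : tabl (top tV0) = [::0;0;0;1;1;1;2;2;2].
Proof. by rewrite (@tabl_fun _ (fun a b => a)) => [|u]; [vm_compute|rewrite ffunE]. Qed.
Lemma tabl_V1 : tabl (top tV1) = [::0;1;2;0;1;2;0;1;2].
Proof. by rewrite (@tabl_fun _ (fun a b => b)) => [|u]; [vm_compute|rewrite ffunE]. Qed.
Lemma tabl_c0 : tabl (top tc0) = [::0;0;0;0;0;0;0;0;0].
Proof.
rewrite (@tabl_fun _ (fun a b => Tn a a a a)) => [|u]; first by vm_compute.
by rewrite ffunE /= valT !ffunE.
Qed.
Lemma tabl_t7 : tabl (top t7) = [::0;0;0;0;0;0;0;1;0].
Proof.
rewrite (@tabl_fun _ (fun a b => Tn b b a a)) => [|u]; first by vm_compute.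
by rewrite ffunE /= valT !ffunE v40 v41 v42 v43.
Qed.
Lemma tabl_t5 : tabl (top t5) = [::0;0;0;0;0;1;0;0;0].
Proof.
rewrite (@tabl_fun _ (fun a b => Tn a a b b)) => [|u]; first by vm_compute.
by rewrite ffunE /= valT !ffunE v40 v41 v42 v43.
Qed.

Lemma clone_comm (t : term 2) m (h : op m) : commutes h T -> commutes (top t) h.
Proof.
move=> HT x; rewrite /top !ffunE.
have -> : [ffun j => [ffun x0 => eval_term t x0] [ffun i => x i j]]
        = [ffun j => eval_term t [ffun i => x i j]].
  by apply/ffunP => j; rewrite !ffunE.
elim: t x => [i|ts IH] x /=.
  by rewrite ffunE; congr (h _); apply/ffunP => j; rewrite !ffunE.
have -> : [ffun k => eval_term (ts k) [ffun i => h [ffun j => x i j]]]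
        = [ffun k => h [ffun j => eval_term (ts k) [ffun i => x i j]]].
  by apply/ffunP => k; rewrite !ffunE IH.
have := HT (fun j k => eval_term (ts k) [ffun i => x i j]).
move=> ->; congr (T _); apply/ffunP => k; rewrite !ffunE.
Qed.

Lemma tabl_nth (g : op 2) k : k < 9 ->
  nth 0 (tabl g) k = val (tab g (inord (k %/ 3)) (inord (k %% 3))).
Proof. by move=> Hk; rewrite /tabl (nth_map 0) ?size_iota // nth_iota. Qed.

Lemma tablApp (ts : 'I_4 -> term 2) :
  tabl (top (AppT ts)) =
  [seq Tn (nth 0 (tabl (top (ts (inord 0)))) k) (nth 0 (tabl (top (ts (inord 1)))) k)
          (nth 0 (tabl (top (ts (inord 2)))) k) (nth 0 (tabl (top (ts (inord 3)))) k)
  | k <- iota 0 9].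
Proof.
apply/eq_in_map => k; rewrite mem_iota => /andP [_ Hk].
by rewrite !tabl_nth // /tab /top !ffunE /= valT !ffunE.
Qed.

Lemma clone_C5 (t : term 2) : tabl (top t) \in C5.
Proof.
elim: t => [i|ts IH].
  case: i => [[|[|//]] Hi].
    have -> : Ordinal Hi = inord 0 by apply: val_inj; rewrite /= inordK.
    by have := tabl_V0; rewrite /tV0 => ->.
  have -> : Ordinal Hi = inord 1 by apply: val_inj; rewrite /= inordK.
  by have := tabl_V1; rewrite /tV1 => ->.
rewrite tablApp.
move: check4 => /allP /(_ _ (IH (inord 0))) /allP /(_ _ (IH (inord 1))).
by move=> /allP /(_ _ (IH (inord 2))) /allP /(_ _ (IH (inord 3))).
Qed.

Lemma hs_in_TstarB s : s \in hs -> TstarB (hop s).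
Proof.
rewrite !inE => /orP [] /eqP ->; apply: TeqFullP.
  by rewrite tabl_h1.
by rewrite tabl_h2.
Qed.

Lemma fop_comm (h : op 2) : TstarB h -> commutes fop h.
Proof.
move=> Hh; apply: comm2P; rewrite tabl_f.
have Ht : all (Teq (tabl h)) tests.
  apply/allP => m Hm; apply: commT_Teq => //.
  by move: check5 => /allP /(_ _ Hm).
have := alltabsP check2 (tabl_size h) (tabl_lt h).
by rewrite Ht.
Qed.

Theorem lemma3p10 :
  (forall g : op 2, TstarBstarB g <-> (in_clone g \/ g = fop)) /\ ~ in_clone fop.
Proof.
split.
  move=> g; split.
    move=> Hg.
    have Hs : all (comm2 (tabl g)) hs.
      apply/allP => s Hs.
      have := commP2 (Hg _ (hs_in_TstarB Hs)).
      by move: Hs; rewrite !inE => /orP [] /eqP ->; rewrite ?tabl_h1 ?tabl_h2.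
    have := alltabsP check1 (tabl_size g) (tabl_lt g).
    rewrite Hs /= !inE.
    case/orP => [/eqP E|]; first by right; apply: tabl_inj; rewrite E tabl_f.
    case/orP => [/eqP E|].
      by left; exists tc0; apply: tabl_inj; rewrite E tabl_c0.
    case/orP => [/eqP E|].
      by left; exists t7; apply: tabl_inj; rewrite E tabl_t7.
    case/orP => [/eqP E|].
      by left; exists t5; apply: tabl_inj; rewrite E tabl_t5.
    case/orP => [/eqP E|/eqP E].
      by left; exists tV0; apply: tabl_inj; rewrite E tabl_V0.
    by left; exists tV1; apply: tabl_inj; rewrite E tabl_V1.
  case => [[t ->]|->] h Hh.
    exact: (clone_comm t Hh).
  exact: fop_comm.
case => t E.
have := clone_C5 t; rewrite /top -E tabl_f.
by vm_compute.
Qed.
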